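(* Let $n\ge2$, let $v\in C^0(\mathbb R^n)$ be quasi-concave, and suppose $v\in C^\infty(U)$ for some domain $U\subset\mathbb R^n$. Then at every point of $U$, $$2\big[|D^2v\,Dv|^2-\Delta v\,\Delta_\infty v\big]\ \ge\ |Dv|^2\big[|D^2v|^2-(\Delta v)^2\big],$$ where $\Delta_\infty v=\langle D^2v\,Dv,Dv\rangle$ and $|D^2v|$ is the Frobenius norm.
   Context: A function $f\in C^0(\mathbb R^n)$ is quasi-concave if $f(\lambda x+(1-\lambda)y)\ge\min\{f(x),f(y)\}$ for all $x,y\in\mathbb R^n$, $\lambda\in[0,1]$; equivalently, every nonempty super level set $\{f>t\}$ is convex. *)

(* Defs.v *)
From HB Require Import structures.
From mathcomp Require Import all_boot all_order all_algebra.
From mathcomp Require Import all_classical all_reals all_analysis.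
Set Implicit Arguments. Unset Strict Implicit. Unset Printing Implicit Defensive.
Import Order.TTheory GRing.Theory Num.Theory.
Import numFieldNormedType.Exports.
Local Open Scope classical_set_scope.
Local Open Scope ring_scope.

Section Defs.
Variables (R : realType) (n : nat).
Notation V := 'rV[R]_n.

Definition basis_vec (i : 'I_n) : V := delta_mx 0 i.

Definition partial (i : 'I_n) (f : V -> R) : V -> R :=
  fun x => 'D_(basis_vec i) f x.

Fixpoint dpartials (s : seq 'I_n) (f : V -> R) : V -> R :=
  match s with
  | [::] => f
  | i :: s' => partial i (dpartials s' f)
  end.

Definition smooth_on (U : set V) (f : V -> R) : Prop :=
  forall (s : seq 'I_n) (x : V), U x ->
    {for x, continuous (dpartials s f)} /\
    (forall i : 'I_n, derivable (dpartials s f) x (basis_vec i)).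

Definition quasi_concave (f : V -> R) : Prop :=
  forall (x y : V) (l : R), 0 <= l <= 1 ->
    Num.min (f x) (f y) <= f (l *: x + (1 - l) *: y).

Definition domain (U : set V) : Prop := open U /\ connected U /\ U !=set0.

Definition grad (f : V -> R) (x : V) : V := \row_i partial i f x.
Definition hess (f : V -> R) (x : V) : 'M[R]_n :=
  \matrix_(i, j) partial i (partial j f) x.

Definition sqnorm_vec (u : V) : R := \sum_i (u 0 i) ^+ 2.
Definition frob2 (A : 'M[R]_n) : R := \sum_i \sum_j (A i j) ^+ 2.
Definition laplacian (f : V -> R) (x : V) : R := \tr (hess f x).
Definition inf_laplacian (f : V -> R) (x : V) : R :=
  (grad f x *m hess f x *m (grad f x)^T) 0 0.
Definition hess_grad (f : V -> R) (x : V) : V := (hess f x *m (grad f x)^T)^T.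
End Defs.

(* Main.v *)
Require Import Defs.
From HB Require Import structures.
From mathcomp Require Import all_boot all_order all_algebra.
From mathcomp Require Import all_classical all_reals all_analysis.
From mathcomp Require Import ring lra.
Import Order.TTheory GRing.Theory Num.Theory.
Import numFieldNormedType.Exports.
Local Open Scope classical_set_scope.
Local Open Scope ring_scope.

Section S.
Variables (R : realType) (n : nat).
Notation V := 'rV[R]_n.

Lemma derive_line (f : V -> R) (z u : V) (t : R) :
  derivable f (z + t *: u) u ->
  is_derive t 1 (fun s => f (z + s *: u)) ('D_u f (z + t *: u)).
Proof.
have E : (fun h : R => h^-1 *: (((fun s => f (z + s *: u)) \o shift t) (h *: 1)
            - f (z + t *: u)))
  = (fun h : R => h^-1 *: ((f \o shift (z + t *: u)) (h *: u) - f (z + t *: u))).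
  apply/funext => h /=; congr (_ *: (f _ - _)).
  by rewrite scaler1 scalerDl addrCA addrA.
move=> df; split; first by rewrite /derivable E.
by rewrite /derive E.
Qed.

Lemma MVT2 (F dF : R -> R) (a : R) :
  (forall t : R, `|t| <= `|a| -> is_derive t 1 F (dF t)) ->
  exists2 c, `|c| <= `|a| & F a - F 0 = a * dF c.
Proof.
move=> hd.
have cont (t : R) : `|t| <= `|a| -> {for t, continuous F}.
  move=> ht; apply: differentiable_continuous; apply/derivable1_diffP.
  by have [] := hd t ht.
have [a0|a0] := leP 0 a.
  have h1 : forall x, x \in `]0, a[ -> is_derive x 1 F (dF x).
    move=> t; rewrite in_itv /= => /andP[t0 ta]; apply: hd.
    by rewrite !ger0_norm ?ltW // (lt_trans t0).
  have h2 : {within `[0, a], continuous F}.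
    apply: continuous_in_subspaceT => t; rewrite inE /= in_itv /= => /andP[t0 ta].
    by apply: cont; rewrite !ger0_norm // (le_trans t0).
  have [c c0a ->] := MVT_segment a0 h1 h2.
  exists c; last by rewrite subr0 mulrC.
  move: c0a; rewrite in_itv /= => /andP[c0 ca].
  by rewrite !ger0_norm.
have h1 : forall x, x \in `]a, 0[ -> is_derive x 1 F (dF x).
  move=> t; rewrite in_itv /= => /andP[t0 ta]; apply: hd.
  by rewrite !ltr0_norm // ?lerN2 ?ltW // (lt_trans t0).
have h2 : {within `[a, 0], continuous F}.
  apply: continuous_in_subspaceT => t; rewrite inE /= in_itv /= => /andP[t0 ta].
  apply: cont; rewrite (ltr0_norm a0).
  by rewrite (ler0_norm ta) lerN2.
have [c c0a E] := MVT_segment (ltW a0) h1 h2.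
exists c.
  move: c0a; rewrite in_itv /= => /andP[c0 ca].
  by rewrite (ltr0_norm a0) (ler0_norm ca) lerN2.
by apply: (can_inj (@opprK _)); rewrite opprB E sub0r mulrN mulrC.
Qed.

Lemma MVT_dir (f : V -> R) (z u : V) (a : R) :
  (forall t : R, `|t| <= `|a| -> derivable f (z + t *: u) u) ->
  exists2 c : R, `|c| <= `|a| & f (z + a *: u) - f z = a * 'D_u f (z + c *: u).
Proof.
move=> hd.
have [c ca E] := @MVT2 (fun s => f (z + s *: u)) (fun t => 'D_u f (z + t *: u)) a
  (fun t ht => @derive_line f z u t (hd t ht)).
by exists c => //; rewrite -E scale0r addr0.
Qed.

Lemma norm_le_entries (u : V) (b : R) : 0 <= b -> (forall i, `|u 0 i| <= b) -> `|u| <= b.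
Proof.
move=> b0 hu.
change (mx_norm u <= b); rewrite mx_normrE.
apply/bigmax_leP; split => // -[i j] _ /=.
by rewrite (ord1 i).
Qed.

Lemma entry_le_norm (u : V) i : `|u 0 i| <= `|u|.
Proof.
change (`|u 0 i| <= mx_norm u); rewrite mx_normrE.
by apply/bigmax_geP; right; exists (0, i).
Qed.

Definition cpt (y w : V) (h : R) (k : nat) : V :=
  y + h *: \row_j (if (j < k)%N then w 0 j else 0).

Lemma cpt0 y w h : cpt y w h 0%N = y.
Proof.
rewrite /cpt (_ : \row_j _ = 0) ?scaler0 ?addr0 //.
by apply/rowP => j; rewrite !mxE.
Qed.

Lemma cptn y w h : cpt y w h n = y + h *: w.
Proof.
rewrite /cpt; congr (_ + _ *: _).
by apply/rowP => j; rewrite !mxE ltn_ord.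
Qed.

Lemma basis_vecE (k j : 'I_n) : basis_vec R k 0 j = (k == j)%:R.
Proof. by rewrite /basis_vec mxE eqxx eq_sym. Qed.

Lemma cptS y w h (k : 'I_n) :
  cpt y w h k.+1 = cpt y w h k + (h * w 0 k) *: basis_vec R k.
Proof.
apply/rowP => j; rewrite /cpt !mxE eqxx /=.
have [->|kj] := eqVneq j k.
  by rewrite ltnSn ltnn mulr1 mulr0 addr0.
rewrite mulr0 addr0 ltnS leq_eqVlt.
suff -> : (nat_of_ord j == nat_of_ord k) = false by [].
by apply/negbTE; apply: contra kj => /eqP/val_inj ->.
Qed.

Lemma cpt_near y w h (k : 'I_n) t : `|t| <= `|h| * `|w| ->
  `|cpt y w h k + t *: basis_vec R k - y| <= `|h| * `|w|.
Proof.
move=> ht; have hw0 : 0 <= `|h| * `|w| by rewrite mulr_ge0.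
apply: norm_le_entries => // j.
rewrite /cpt !mxE eqxx /= (_ : forall a b c : R, a + b + c - a = b + c); last by move=> a b c; ring.
have [->|kj] := eqVneq j k.
  by rewrite ltnn mulr0 add0r mulr1.
rewrite mulr0 addr0; case: ifP => _; last by rewrite mulr0 normr0.
by rewrite normrM ler_wpM2l // entry_le_norm.
Qed.

Lemma dir_deriv (f : V -> R) (y w : V) (r : R) : 0 < r ->
  (forall z, `|z - y| < r -> forall k, derivable f z (basis_vec R k)) ->
  (forall k, {for y, continuous (partial k f)}) ->
  is_derive y w f (\sum_k w 0 k * partial k f y).
Proof.
move=> r0 hd hc.
set S := \sum_k _.
suff H : (fun h : R => h^-1 *: ((f \o shift y) (h *: w) - f y)) @ 0^' --> S.
  by split; [apply/cvg_ex; exists S; exact: H | exact: cvg_lim H].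
apply/cvgrPdist_le => eps eps0.
set M := n%:R * `|w| + 1.
have M0 : 0 < M by rewrite /M ltr_pwDr // mulr_ge0.
set e := eps / M.
have e0 : 0 < e by rewrite divr_gt0.
have : \forall z \near y, forall k, `|partial k f y - partial k f z| <= e.
  apply: (@filter_forall _ _ _ (nbhs y) _) => k.
  by have := hc k; move=> /cvgrPdist_le; apply.
move=> /nbhs_normP [d /= d0 hdP].
set dd := Num.min d r.
have dd0 : 0 < dd by rewrite lt_min d0 r0.
have w1 : 0 < `|w| + 1 by rewrite ltr_pwDr.
near=> h.
have hne : h != 0 by near: h; exact: nbhs_dnbhs_neq.
have hsm : `|h| < dd / (`|w| + 1) by near: h; apply: dnbhs0_lt; rewrite divr_gt0.
have hw : `|h| * `|w| < dd.
  rewrite ltr_pdivlMr // in hsm; apply: le_lt_trans hsm.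
  by rewrite ler_wpM2l // lerDl.
have hwd : `|h| * `|w| < d by apply: (lt_le_trans hw); rewrite ge_min lexx.
have hwr : `|h| * `|w| < r by apply: (lt_le_trans hw); rewrite ge_min lexx orbT.
have step : forall k : 'I_n,
  `|f (cpt y w h k.+1) - f (cpt y w h k) - (h * w 0 k) * partial k f y|
     <= `|h| * `|w| * e.
  move=> k; rewrite cptS.
  have hak : `|h * w 0 k| <= `|h| * `|w| by rewrite normrM ler_wpM2l // entry_le_norm.
  have [c hc' ->] := @MVT_dir f (cpt y w h k) (basis_vec R k) (h * w 0 k)
    (fun t ht => hd _ (le_lt_trans (@cpt_near y w h k _ (le_trans ht hak)) hwr) k).
  rewrite -mulrBr normrM; apply: ler_pM => //.
  rewrite distrC; apply: (hdP (cpt y w h k + c *: basis_vec R k)).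
  by rewrite /= distrC; apply: le_lt_trans (@cpt_near y w h k _ (le_trans hc' hak)) hwd.
have tele : f (y + h *: w) - f y - h * S =
  \sum_(k < n) (f (cpt y w h k.+1) - f (cpt y w h k) - (h * w 0 k) * partial k f y).
  rewrite sumrB; congr (_ - _).
    rewrite -(big_mkord xpredT (fun k => f (cpt y w h k.+1) - f (cpt y w h k))).
    by rewrite telescope_sumr // cptn cpt0.
  by rewrite /S mulr_sumr; apply: eq_bigr => k _; rewrite mulrA.
have bnd : `|f (y + h *: w) - f y - h * S| <= n%:R * (`|h| * `|w| * e).
  rewrite tele; apply: le_trans (ler_norm_sum _ _ _) _.
  apply: le_trans (ler_sum _ (fun k _ => step k)) _.
  by rewrite sumr_const card_ord mulr_natl.
have -> : S - h^-1 *: ((f \o shift y) (h *: w) - f y)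
   = - h^-1 * (f (y + h *: w) - f y - h * S).
  rewrite /= [h *: w + y]addrC -[h^-1 *: _]/(h^-1 * _).
  by field.
rewrite normrM normrN normfV ler_pdivrMl ?normr_gt0 //.
apply: le_trans bnd _.
have key : n%:R * `|w| * e <= eps.
  by rewrite /e mulrA ler_pdivrMr // [eps * M]mulrC ler_wpM2r ?ltW // /M ltrDl.
have h0 := normr_ge0 h.
rewrite (_ : n%:R * (`|h| * `|w| * e) = `|h| * (n%:R * `|w| * e)); last by ring.
by rewrite ler_wpM2l.
Unshelve. all: by end_near.
Qed.

Lemma basis_norm (k : 'I_n) : `|basis_vec R k| <= 1.
Proof.
apply: norm_le_entries => // j; rewrite mxE eqxx /=.
by case: (j == k); rewrite ?normr1 ?normr0.
Qed.

Lemma near2 (y : V) (i j : 'I_n) (a b h : R) : `|a| <= `|h| -> `|b| <= `|h| ->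
  `|y + a *: basis_vec R i + b *: basis_vec R j - y| <= 2 * `|h|.
Proof.
move=> ha hb; rewrite addrAC (addrAC y) subrr add0r.
apply: le_trans (ler_normD _ _) _; rewrite !normrZ.
have := basis_norm i; have := basis_norm j.
have := normr_ge0 a; have := normr_ge0 b.
have := normr_ge0 (basis_vec R i); have := normr_ge0 (basis_vec R j).
nra.
Qed.

Lemma second_diff (f : V -> R) (y : V) (r : R) (i j : 'I_n) (h : R) :
  (forall z, `|z - y| < r -> derivable f z (basis_vec R i) /\
      derivable (partial i f) z (basis_vec R j)) ->
  2 * `|h| < r ->
  exists2 P : V, `|P - y| <= 2 * `|h| &
    f (y + h *: basis_vec R i + h *: basis_vec R j) - f (y + h *: basis_vec R i)
    - f (y + h *: basis_vec R j) + f y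
    = h ^+ 2 * partial j (partial i f) P.
Proof.
move=> hd hr.
set ei := basis_vec R i; set ej := basis_vec R j.
have pt : forall a b : R, `|a| <= `|h| -> `|b| <= `|h| ->
    `|y + a *: ei + b *: ej - y| < r.
  by move=> a b ha hb; apply: le_lt_trans (@near2 y i j a b h ha hb) hr.
have h0 : `|0 : R| <= `|h| by rewrite normr0.
have d1 : forall t : R, `|t| <= `|h| -> derivable f (y + h *: ej + t *: ei) ei.
  move=> t ht; apply: (proj1 (hd _ _)).
  by have := pt t h ht (lexx _); rewrite [y + t *: ei + h *: ej]addrAC.
have d2 : forall t : R, `|t| <= `|h| -> derivable f (y + t *: ei) ei.
  move=> t ht; apply: (proj1 (hd _ _)).
  by have := pt t 0 ht h0; rewrite scale0r addr0.
have [c hc E1] := @MVT2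
  ((fun s => f ((y + h *: ej) + s *: ei)) - (fun s => f (y + s *: ei)))
  (fun t => 'D_ei f ((y + h *: ej) + t *: ei) - 'D_ei f (y + t *: ei)) h
  (fun t ht => is_deriveB (@derive_line f _ ei t (d1 t ht))
                          (@derive_line f y ei t (d2 t ht))).
have [c' hc' E2] := @MVT_dir (partial i f) (y + c *: ei) ej h
  (fun t ht => proj2 (hd _ (pt c t hc ht))).
exists (y + c *: ei + c' *: ej); first exact: (@near2 y i j c c' h hc hc').
have E1' : (f (y + h *: ej + h *: ei) - f (y + h *: ei)) - (f (y + h *: ej) - f y)
    = h * (partial i f (y + h *: ej + c *: ei) - partial i f (y + c *: ei)).
  by rewrite -E1 !fctE /= !scale0r !addr0.
rewrite [y + h *: ei + h *: ej]addrAC.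
have -> : forall a b c d : R, a - b - c + d = (a - b) - (c - d) by move=> *; ring.
rewrite E1' [y + h *: ej + c *: ei]addrAC E2.
by rewrite mulrA -expr2.
Qed.

End S.

Section Alg.
Variables (R : realType).

Lemma quad_disc (a b c : R) : a <= 0 ->
  (forall t, t ^+ 2 * a + 2 * t * b + c <= 0) -> b ^+ 2 <= a * c.
Proof.
move=> a0 H.
have [an|ae] : a < 0 \/ a = 0.
  by move: a0; rewrite le_eqVlt => /orP[/eqP->|->]; [right|left].
  set t := - b / a.
  have ht : t * a = - b by rewrite /t divfK // lt_eqF.
  have := H t.
  have e1 : t ^+ 2 * a = - (t * b) by rewrite expr2 -mulrA ht mulrN.
  rewrite e1 => h1.
  have h2 : t * b + c <= 0 by lra.
  have h3 : 0 <= a * (t * b + c) by rewrite mulr_le0.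
  have e2 : a * (t * b + c) = - b ^+ 2 + a * c.
    by rewrite mulrDr mulrA [a * t]mulrC ht expr2; ring.
  lra.
subst a.
have [b0|bn0] := eqVneq b 0; first by rewrite b0 expr0n /= mul0r.
have := H ((1 - c) / (2 * b)).
rewrite mulr0 add0r (_ : 2 * ((1 - c) / (2 * b)) * b = 1 - c); first lra.
by field.
Qed.

Variable n : nat.

Lemma tr11 (A : 'M[R]_1) : \tr A = A 0 0.
Proof. by rewrite /mxtrace big_ord1. Qed.

Lemma sqnormE (u : 'rV[R]_n) : sqnorm_vec u = (u *m u^T) 0 0.
Proof. by rewrite /sqnorm_vec mxE; apply: eq_bigr => i _; rewrite mxE expr2. Qed.

Lemma frob2E (H : 'M[R]_n) : frob2 H = \tr (H *m H^T).
Proof.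
rewrite /frob2 /mxtrace; apply: eq_bigr => i _; rewrite mxE.
by apply: eq_bigr => j _; rewrite mxE expr2.
Qed.

Lemma entry_trmx (m : nat) (X : 'M[R]_(1, n)) (Y : 'M[R]_(m, n)) j :
  (X *m Y^T) 0 j = (X *m (row j Y)^T) 0 0.
Proof. by rewrite !mxE; apply: eq_bigr => k _; rewrite !mxE. Qed.

Lemma Bf_sym (H : 'M[R]_n) (u w : 'rV[R]_n) : H^T = H ->
  (u *m H *m w^T) 0 0 = (w *m H *m u^T) 0 0.
Proof.
move=> HT.
have -> : (u *m H *m w^T) 0 0 = ((u *m H *m w^T)^T) 0 0 by rewrite [in RHS]mxE.
by rewrite !trmx_mul trmxK HT mulmxA.
Qed.

Lemma quad_expand (H : 'M[R]_n) (u w : 'rV[R]_n) t : H^T = H ->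
  ((t *: u + w) *m H *m (t *: u + w)^T) 0 0 =
  t ^+ 2 * (u *m H *m u^T) 0 0 + 2 * t * (u *m H *m w^T) 0 0
  + (w *m H *m w^T) 0 0.
Proof.
move=> HT.
have := Bf_sym H u w HT.
rewrite linearD /= linearZ /= !mulmxDl !mulmxDr -!scalemxAl -!scalemxAr.
set a := u *m H *m u^T; set b := u *m H *m w^T; set c := w *m H *m u^T.
set d := w *m H *m w^T.
rewrite !mxE => bc; rewrite bc; ring.
Qed.

Lemma alg (H : 'M[R]_n) (p : 'rV[R]_n) :
  H^T = H ->
  (forall w : 'rV[R]_n, (w *m p^T) 0 0 = 0 -> (w *m H *m w^T) 0 0 <= 0) ->
  sqnorm_vec p * (frob2 H - (\tr H) ^+ 2) <=
  2 * (sqnorm_vec ((H *m p^T)^T) - \tr H * (p *m H *m p^T) 0 0).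
Proof.
move=> HT Q.
rewrite !sqnormE frob2E HT trmxK trmx_mul HT trmxK mulmxA.
set s := (p *m p^T) 0 0.
set D := (p *m H *m p^T) 0 0.
set A2 := (p *m H *m H *m p^T) 0 0.
set F := \tr (H *m H).
set T := \tr H.
have s_ge0 : 0 <= s.
  rewrite /s mxE; apply: sumr_ge0 => i _; rewrite mxE -expr2; exact: sqr_ge0.
have [s0|spos] := eqVneq s 0.
  have p0 : p = 0.
    apply/rowP => i; rewrite mxE.
    have : (p 0 i) ^+ 2 = 0.
      move: s0; rewrite /s mxE => /eqP; rewrite psumr_eq0 => [/allP/(_ i)|].
        by rewrite mem_index_enum mxE -expr2 => /(_ isT)/eqP.
      by move=> j _; rewrite mxE -expr2 sqr_ge0.
    by move/eqP; rewrite sqrf_eq0 => /eqP.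
  rewrite s0 /A2 /D p0 !mul0mx mxE mulr0 subrr mulr0 mul0r.
  by [].
have s_gt0 : 0 < s by rewrite lt_def spos s_ge0.
have hs : p *m p^T = s%:M by apply: mx11_scalar.
have hD : p *m H *m p^T = D%:M by apply: mx11_scalar.
set P : 'M[R]_n := s%:M - p^T *m p.
have hPp : P *m p^T = 0.
  by rewrite /P mulmxBl mul_scalar_mx -mulmxA hs mul_mx_scalar subrr.
have hPT : P^T = P.
  by rewrite /P linearB /= tr_scalar_mx trmx_mul trmxK.
have hPP : P *m P = s *: P.
  by rewrite {1}/P mulmxBr mul_mx_scalar mulmxA hPp mul0mx subr0.
set N := P *m H *m P.
have trN : \tr N = s * (s * T - D).
  rewrite /N mxtrace_mulC mulmxA hPP -scalemxAl mxtraceZ; congr (_ * _).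
  rewrite /P mulmxBl mul_scalar_mx linearB /= mxtraceZ -mulmxA.
  by rewrite mxtrace_mulC hD tr11 mxE eqxx mulr1n.
set G := p *m H.
have t2 : \tr (H *m (p^T *m G)) = A2.
  by rewrite mulmxA mxtrace_mulC /G !mulmxA tr11.
have t3 : \tr (p^T *m G *m H) = A2.
  by rewrite -mulmxA mxtrace_mulC /G tr11.
have t4 : \tr (p^T *m G *m (p^T *m G)) = D ^+ 2.
  rewrite mulmxA -(mulmxA _ G) /G hD mul_mx_scalar -scalemxAl mxtraceZ.
  by rewrite mxtrace_mulC hD tr11 mxE eqxx mulr1n expr2.
have trNN : \tr (N *m N) = s ^+ 2 * (s ^+ 2 * F - 2 * s * A2 + D ^+ 2).
  have e1 : N *m N = (P *m H) *m (P *m P) *m (H *m P) by rewrite /N !mulmxA.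
  rewrite e1 hPP -scalemxAr -scalemxAl mxtraceZ.
  have e2 : P *m H *m P *m (H *m P) = (P *m H *m P *m H) *m P by rewrite !mulmxA.
  rewrite e2 mxtrace_mulC !mulmxA hPP -!scalemxAl mxtraceZ. 
  have ePH : P *m H = s *: H - p^T *m G by rewrite /P mulmxBl mul_scalar_mx mulmxA.
  have e3 : P *m H *m P *m H = (P *m H) *m (P *m H) by rewrite !mulmxA.
  rewrite e3 ePH mulmxBl !mulmxBr !linearB /= -!scalemxAl -!scalemxAr !mxtraceZ.
  rewrite t2 t3 t4 -/F; ring.
have NT : N^T = N by rewrite /N !trmx_mul hPT HT mulmxA.
have Nij : forall i j, N i j = (row i P *m H *m (row j P)^T) 0 0.
  by move=> i j; rewrite -(@entry_trmx n (row i P *m H) P j) hPT -!row_mul [RHS]mxE.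
have rp : forall i, row i P *m p^T = 0 by move=> i; rewrite -row_mul hPp row0.
have ineq : forall i j, N i j ^+ 2 <= N i i * N j j.
  move=> i j; rewrite !Nij; apply: quad_disc.
    by apply: Q; rewrite rp mxE.
  move=> t; rewrite -quad_expand //; apply: Q.
  by rewrite mulmxDl -scalemxAl !rp scaler0 addr0 mxE.
have sumge : 0 <= \tr N ^+ 2 - \tr (N *m N).
  have -> : \tr N ^+ 2 - \tr (N *m N) = \sum_i \sum_j (N i i * N j j - N i j ^+ 2).
    have Nsym : forall i j, N j i = N i j by move=> i j; rewrite -[in LHS]NT mxE.
    rewrite /mxtrace expr2 mulr_suml.
    have -> : \sum_i (N *m N) i i = \sum_i \sum_j N i j ^+ 2.
      by apply: eq_bigr => i _; rewrite mxE; apply: eq_bigr => j _; rewrite Nsym expr2.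
    rewrite -sumrB; apply: eq_bigr => i _; rewrite mulr_sumr -sumrB.
    by apply: eq_bigr.
  apply: sumr_ge0 => i _; apply: sumr_ge0 => j _; rewrite subr_ge0; exact: ineq.
rewrite trN trNN in sumge.
have : 0 <= s ^+ 3 * (2 * (A2 - T * D) - s * (F - T ^+ 2)).
  by rewrite (_ : _ * _ = (s * (s * T - D)) ^+ 2 - s ^+ 2 * (s ^+ 2 * F - 2 * s * A2 + D ^+ 2)) //; ring.
by rewrite pmulr_rge0 ?exprn_gt0 // subr_ge0.
Qed.
End Alg.

Section S.
Variables (R : realType) (n : nat).
Notation V := 'rV[R]_n.
Lemma half_lt (m : R) : 0 < m -> 2 * (m / 4) < m.
Proof. by move=> m0; lra. Qed.
Lemma quarter (d : R) : 0 < d -> d <= d / 4 + d / 4 -> False.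
Proof. by move=> d0 h; lra. Qed.

Lemma eq_of_close (a b : R) :
  (forall e, 0 < e -> exists a1 b1 : R, [/\ `|a - a1| <= e, `|b - b1| <= e & a1 = b1]) ->
  a = b.
Proof.
move=> H; apply/eqP; rewrite -subr_eq0 -normr_eq0; apply/negPn/negP => dn0.
have d0 : 0 < `|a - b| by rewrite lt_def dn0 normr_ge0.
have [a1 [b1 [h1 h2 E]]] := H (`|a - b| / 4) (divr_gt0 d0 (ltr0n _ 4)).
have : `|(a - a1) - (b - b1)| <= `|a - b| / 4 + `|a - b| / 4.
  by apply: le_trans (ler_normB _ _) _; apply: lerD.
rewrite E (_ : a - b1 - (b - b1) = a - b); last by ring.
exact: quarter.
Qed.

Lemma schwarz (f : V -> R) (y : V) (r : R) (i j : 'I_n) : 0 < r ->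
  (forall z, `|z - y| < r -> forall k l : 'I_n,
     derivable f z (basis_vec R k) /\ derivable (partial k f) z (basis_vec R l)) ->
  {for y, continuous (partial j (partial i f))} ->
  {for y, continuous (partial i (partial j f))} ->
  partial j (partial i f) y = partial i (partial j f) y.
Proof.
move=> r0 hd cA cB; apply: eq_of_close => e e0.
have /nbhs_normP [d1 /= d10 h1] :
    \forall z \near y, `|partial j (partial i f) y - partial j (partial i f) z| <= e.
  by move/cvgrPdist_le : cA; apply.
have /nbhs_normP [d2 /= d20 h2] :
    \forall z \near y, `|partial i (partial j f) y - partial i (partial j f) z| <= e.
  by move/cvgrPdist_le : cB; apply.
have hm0 : 0 < Num.min (Num.min d1 d2) r by rewrite !lt_min d10 d20 r0.
have h0 : 0 < Num.min (Num.min d1 d2) r / 4 by rewrite divr_gt0.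
have hle : 2 * `|Num.min (Num.min d1 d2) r / 4| < Num.min (Num.min d1 d2) r.
  by rewrite gtr0_norm //; apply: half_lt.
move: h0 hle; set h := Num.min (Num.min d1 d2) r / 4 => h0 hle.
have hr : 2 * `|h| < r by apply: (lt_le_trans hle); rewrite ge_min lexx orbT.
have hd1 : 2 * `|h| < d1.
  by apply: (lt_le_trans hle); rewrite !ge_min lexx.
have hd2 : 2 * `|h| < d2.
  by apply: (lt_le_trans hle); rewrite !ge_min lexx orbT.
have [P1 hP1 E1] := @second_diff R n f y r i j h (fun z hz => hd z hz i j) hr.
have [P2 hP2 E2] := @second_diff R n f y r j i h (fun z hz => hd z hz j i) hr.
exists (partial j (partial i f) P1), (partial i (partial j f) P2); split.
- by apply: (h1 P1); rewrite /= distrC; apply: le_lt_trans hP1 hd1.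
- by apply: (h2 P2); rewrite /= distrC; apply: le_lt_trans hP2 hd2.
have hh : h ^+ 2 != 0 by rewrite expf_neq0 // gt_eqF.
apply: (mulfI hh); apply: (etrans (esym E1)); apply: (etrans _ E2).
rewrite [y + h *: basis_vec R j + h *: basis_vec R i]addrAC.
ring.
Qed.
End S.

Section S.
Variables (R : realType) (n : nat).
Notation V := 'rV[R]_n.

Lemma MVT_open (F dF : R -> R) (a : R) : a != 0 ->
  (forall t : R, `|t| <= `|a| -> is_derive t 1 F (dF t)) ->
  exists c, [/\ 0 < c * a, `|c| < `|a| & F a - F 0 = a * dF c].
Proof.
move=> an0 hd.
have cont (t : R) : `|t| <= `|a| -> {for t, continuous F}.
  move=> ht; apply: differentiable_continuous; apply/derivable1_diffP.
  by have [] := hd t ht.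
have [a0|a0] := ltP 0 a.
  have h1 : forall x, x \in `]0, a[ -> is_derive x 1 F (dF x).
    move=> t; rewrite in_itv /= => /andP[t0 ta]; apply: hd.
    by rewrite !ger0_norm ?ltW // (lt_trans t0).
  have h2 : {within `[0, a], continuous F}.
    apply: continuous_in_subspaceT => t; rewrite inE /= in_itv /= => /andP[t0 ta].
    by apply: cont; rewrite !ger0_norm // (le_trans t0).
  have [c c0a E] := MVT a0 h1 h2.
  move: c0a; rewrite in_itv /= => /andP[c0 ca].
  exists c; split; first by rewrite mulr_gt0.
    by rewrite !gtr0_norm.
  by rewrite E subr0 mulrC.
have an : a < 0 by rewrite lt_neqAle an0 a0.
have h1 : forall x, x \in `]a, 0[ -> is_derive x 1 F (dF x).
  move=> t; rewrite in_itv /= => /andP[t0 ta]; apply: hd.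
  by rewrite !ltr0_norm // ?(lt_trans t0) // lerN2 ltW.
have h2 : {within `[a, 0], continuous F}.
  apply: continuous_in_subspaceT => t; rewrite inE /= in_itv /= => /andP[t0 ta].
  apply: cont; rewrite (ltr0_norm an).
  by rewrite (ler0_norm ta) lerN2.
have [c c0a E] := MVT an h1 h2.
move: c0a; rewrite in_itv /= => /andP[c0 ca].
exists c; split; first by rewrite -mulrNN mulr_gt0 // oppr_gt0.
  by rewrite (ltr0_norm an) (ltr0_norm ca) ltrN2.
by apply: (can_inj (@opprK _)); rewrite opprB E sub0r mulrN mulrC.
Qed.

Lemma pt_mid (x w : V) (t : R) :
  (1 / 2 : R) *: (x + t *: w) + (1 - 1 / 2) *: (x + (- t) *: w) = x.
Proof. by apply/rowP => i; rewrite !mxE; field. Qed.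

Lemma near_shift (x z u : V) (r a : R) : `|z - (x + u)| < r - a -> `|u| <= a ->
  `|z - x| < r.
Proof.
move=> h1 h2.
have -> : z - x = (z - (x + u)) + u by rewrite opprD addrA addrNK.
apply: le_lt_trans (ler_normD _ _) _.
by rewrite -(subrK a r); apply: ltr_leD.
Qed.

Lemma qc_neg (v : V -> R) (x : V) (r : R) (w : V) : 0 < r ->
  quasi_concave v ->
  (forall z, `|z - x| < r -> forall k l : 'I_n,
     derivable v z (basis_vec R k) /\ derivable (partial k v) z (basis_vec R l)) ->
  (forall z, `|z - x| < r -> forall k, {for z, continuous (partial k v)}) ->
  (forall k l, {for x, continuous (partial l (partial k v))}) ->
  \sum_k w 0 k * partial k v x = 0 ->
  \sum_k w 0 k * (\sum_l w 0 l * partial l (partial k v) x) <= 0.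
Proof.
move=> r0 qc hd hc hc2 wp.
set q := \sum_k _.
rewrite leNgt; apply/negP => qpos.
pose g : V -> R := \sum_(k < n) (w 0 k \*: partial k v).
have gE : forall z, g z = \sum_k w 0 k * partial k v z.
  by move=> z; rewrite /g fct_sumE; apply: eq_bigr => k _.
have dg : is_derive x w g q.
  apply: is_derive_sum => k; apply: is_deriveZ.
  apply: (@dir_deriv R n (partial k v) x w r r0) => [z hz l|l].
    exact: (proj2 (hd z hz k l)).
  exact: hc2.
have dphi : forall t : R, `|t| * `|w| < r ->
    is_derive t 1 (fun s => v (x + s *: w)) (g (x + t *: w)).
  move=> t ht.
  have r'0 : 0 < r - `|t| * `|w| by rewrite subr_gt0.
  have htw : `|t *: w| <= `|t| * `|w| by rewrite normrZ.
  have hxt : `|x + t *: w - x| < r.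
    by rewrite addrAC subrr add0r; apply: le_lt_trans htw ht.
  have [dd dv] := @dir_deriv R n v (x + t *: w) w (r - `|t| * `|w|) r'0
    (fun z hz k => proj1 (hd z (@near_shift x z (t *: w) r _ hz htw) k k))
    (fun k => hc _ hxt k).
  have := @derive_line R n v x w t dd; rewrite dv gE; exact.
have g0 : g x = 0 by rewrite gE.
have cq : (fun h : R => h^-1 *: ((g \o shift x) (h *: w) - g x)) @ 0^' --> q.
  by case: dg => dd <-; exact: dd.
have : \forall h \near 0^', `|q - h^-1 *: ((g \o shift x) (h *: w) - g x)| < q.
  by move/cvgrPdist_lt : cq; apply.
rewrite near_withinE => /nbhs_normP [d /= d0 hdP].
have pos : forall c : R, c != 0 -> `|c| < d -> 0 < c^-1 * g (x + c *: w).
  move=> c c0 cd.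
  have := hdP c; rewrite /= sub0r normrN => /(_ cd c0).
  rewrite g0 subr0 [c *: w + x]addrC => hq.
  have : q - c^-1 * g (x + c *: w) < q by apply: le_lt_trans (ler_norm _) hq.
  by rewrite ltrBlDr ltrDl.
have w1 : 0 < `|w| + 1 by rewrite ltr_pwDr.
set m := Num.min d (r / (`|w| + 1)).
have m0 : 0 < m by rewrite lt_min d0 divr_gt0.
have md : m <= d by rewrite ge_min lexx.
have mr : m * `|w| < r.
  have : m <= r / (`|w| + 1) by rewrite ge_min lexx orbT.
  rewrite ler_pdivlMr // => h1; apply: lt_le_trans h1.
  by rewrite ltr_pM2l // ltrDl.
set t := m / 2.
have t0 : 0 < t by rewrite divr_gt0.
have tm : t < m by rewrite /t ltr_pdivrMr // ltr_pMr // ltr1n.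
have side : forall a : R, `|a| = t -> v x < v (x + a *: w).
  move=> a hat.
  have an0 : a != 0 by rewrite -normr_eq0 hat gt_eqF.
  have hyp : forall s : R, `|s| <= `|a| ->
      is_derive s 1 (fun s => v (x + s *: w)) (g (x + s *: w)).
    move=> s hs; apply: dphi; apply: le_lt_trans mr.
    by rewrite ler_wpM2r // (le_trans hs) // hat ltW.
  have [c [ca cat E]] := @MVT_open (fun s => v (x + s *: w))
     (fun s => g (x + s *: w)) a an0 hyp.
  move: E; rewrite /= scale0r addr0 => E.
  have c0 : c != 0 by apply: contraTneq ca => ->; rewrite mul0r ltxx.
  have cd : `|c| < d by apply: lt_le_trans md; rewrite (lt_le_trans cat) // hat ltW.
  have hp := pos c c0 cd.
  rewrite -subr_gt0 E (_ : a * g (x + c *: w) = (c * a) * (c^-1 * g (x + c *: w))).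
    by rewrite mulr_gt0.
  by field.
have h1 := side t (gtr0_norm t0).
have nt : `|- t| = t by rewrite normrN gtr0_norm.
have h2 := side (- t) nt.
have hl : 0 <= (1 / 2 : R) <= 1.
  apply/andP; split; first by rewrite divr_ge0.
  by rewrite ler_pdivrMr ?ltr0n // mul1r ler1n.
have := qc (x + t *: w) (x + (- t) *: w) (1 / 2) hl.
rewrite pt_mid ge_min !leNgt h1 h2.
by [].
Qed.
End S.

Theorem lemma6p1 (R : realType) (n : nat) (hn : (2 <= n)%N)
  (v : 'rV[R]_n -> R) (U : set 'rV[R]_n) :
  continuous v -> quasi_concave v -> domain U -> smooth_on U v ->
  forall x : 'rV[R]_n, U x ->
    2 * (sqnorm_vec (hess_grad v x) - laplacian v x * inf_laplacian v x)
    >= sqnorm_vec (grad v x) * (frob2 (hess v x) - (laplacian v x) ^+ 2).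
Proof.
move=> vc qc [hop _] hsm x Ux.
have /nbhs_normP [r /= r0 hr] : \forall z \near x, U z by apply: hop.
have inU : forall z, `|z - x| < r -> U z.
  by move=> z hz; apply: hr; rewrite /= distrC.
have hd : forall z, `|z - x| < r -> forall k l : 'I_n,
    derivable v z (basis_vec R k) /\ derivable (partial k v) z (basis_vec R l).
  move=> z hz k l; split.
    exact: (proj2 (hsm [::] z (inU z hz)) k).
  exact: (proj2 (hsm [:: k] z (inU z hz)) l).
have hc1 : forall z, `|z - x| < r -> forall k, {for z, continuous (partial k v)}.
  by move=> z hz k; exact: (proj1 (hsm [:: k] z (inU z hz))).
have hc2 : forall k l, {for x, continuous (partial l (partial k v))}.
  by move=> k l; exact: (proj1 (hsm [:: l; k] x Ux)).
have HT : (hess v x)^T = hess v x.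
  apply/matrixP => i j; rewrite !mxE.
  exact: (@schwarz R n v x r i j r0 hd (hc2 i j) (hc2 j i)).
have Q : forall w : 'rV[R]_n, (w *m (grad v x)^T) 0 0 = 0 ->
    (w *m hess v x *m w^T) 0 0 <= 0.
  move=> w hw.
  have wp : \sum_k w 0 k * partial k v x = 0.
    by rewrite -[RHS]hw mxE; apply: eq_bigr => k _; rewrite !mxE.
  have := @qc_neg R n v x r w r0 qc hd hc1 hc2 wp.
  rewrite mxE; congr (_ <= _); apply: eq_bigr => j _.
  by rewrite !mxE mulrC; congr (_ * _); apply: eq_bigr => k _; rewrite !mxE.
exact: (@alg R n _ _ HT Q).
Qed.
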